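(* Let $\xi>2$ and define $$\varepsilon_{min}(\xi)=\begin{cases}\infty,&\xi\le3,\\ \sqrt{(1-\tfrac2\xi)(1+\tfrac{1}{\xi-3})},&3<\xi<4,\\ 1,&\xi\ge4,\end{cases}\qquad \lambda_{max}(\varepsilon,\xi)=\xi\sqrt{\frac{\varepsilon^2}{1-\frac2\xi}-1}.$$ Then the set of pairs $(\varepsilon,\lambda)$ with $\varepsilon>1$ belonging to case (II) at position $\xi$ is exactly the set of pairs with $\varepsilon>\varepsilon_{min}(\xi)$ and $\lambda_c(\varepsilon)<\lambda<\lambda_{max}(\varepsilon,\xi)$.
   Context: Dimensionless potential: $U_\lambda(\xi)=(1-\tfrac2\xi)(1+\tfrac{\lambda^2}{\xi^2})$. For $\lambda^2>12$, $U_\lambda$ on $(2,\infty)$ has a local maximum at $\xi_{max}(\lambda)=\tfrac{\lambda^2}{2}(1-\sqrt{1-12/\lambda^2})$. For $\varepsilon>1$, $\lambda_c(\varepsilon)$ is the value of $\lambda$ for which the maximum of $U_\lambda$ equals $\varepsilon^2$; explicitly $\lambda_c(\varepsilon)^2=12/(1-4\alpha-8\alpha^2+8\alpha\sqrt{\alpha^2+\alpha})$, $\alpha=\tfrac98\varepsilon^2-1$ (so $\lambda_c(\varepsilon)>4$ for $\varepsilon>1$). A pair $(\varepsilon,\lambda)$ with $\varepsilon>1$ belongs to case (II) (scattered particles incoming from infinity) at position $\xi$ if $\lambda>\lambda_c(\varepsilon)$, $\xi>\xi_{max}(\lambda)$ and $U_\lambda(\xi)<\varepsilon^2$. *)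

(* Defs.v *)
From Stdlib Require Import Reals.
From Coquelicot Require Import Rbar.
Open Scope R_scope.

Definition U (lam xi : R) : R := (1 - 2 / xi) * (1 + lam ^ 2 / xi ^ 2).

(* Location of the local maximum of U_lambda (for lambda^2 > 12) *)
Definition xi_max (lam : R) : R := lam ^ 2 / 2 * (1 - sqrt (1 - 12 / lam ^ 2)).

Definition alpha (eps : R) : R := 9 / 8 * eps ^ 2 - 1.

Definition lambda_c (eps : R) : R :=
  let a := alpha eps in
  sqrt (12 / (1 - 4 * a - 8 * a ^ 2 + 8 * a * sqrt (a ^ 2 + a))).

Definition case_II (eps lam xi : R) : Prop :=
  lambda_c eps < lam /\ xi_max lam < xi /\ U lam xi < eps ^ 2.

Definition eps_min (xi : R) : Rbar :=
  if Rle_dec xi 3 then p_infty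
  else if Rlt_dec xi 4 then Finite (sqrt ((1 - 2 / xi) * (1 + 1 / (xi - 3))))
  else Finite 1.

Definition lambda_max (eps xi : R) : R := xi * sqrt (eps ^ 2 / (1 - 2 / xi) - 1).

(* Main.v *)
Require Import Defs.
From Stdlib Require Import Reals Lra Psatz.
From Coquelicot Require Import Rbar.
Open Scope R_scope.

Lemma div_nonneg a b : 0 <= a -> 0 < b -> 0 <= a / b.
Proof. intros. unfold Rdiv. apply Rmult_le_pos; [auto|left; apply Rinv_0_lt_compat; auto]. Qed.

Lemma lt_div_l a b c : 0 < c -> a < b * c -> a / c < b.
Proof. intros Hc H. apply Rmult_lt_reg_r with c; auto.
  replace (a / c * c) with a by (field; lra). lra. Qed.

Lemma key (eps : R) : 1 < eps -> exists x, 3 < x < 4 /\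
  eps ^ 2 = (x-2)^2/(x*(x-3)) /\ lambda_c eps ^ 2 = x^2/(x-3) /\ 0 <= lambda_c eps.
Proof.
  intros He.
  set (e2 := eps^2).
  assert (He2 : 1 < e2) by (unfold e2; nra).
  set (D := sqrt (9*e2^2 - 8*e2)).
  assert (HD2 : D*D = 9*e2^2 - 8*e2) by (apply sqrt_sqrt; nra).
  assert (HD0 : 0 <= D) by apply sqrt_pos.
  set (x := (3*e2 - 4 + D)/(2*(e2-1))).
  assert (Hx : 2*(e2-1)*x = 3*e2-4+D) by (unfold x; field; lra).
  assert (Hx3 : 3 < x).
  { assert (D > 3*e2-2) by nra. nra. }
  assert (Hx4 : x < 4).
  { assert (D < 5*e2-4) by nra. nra. }
  assert (Hq : (e2-1)*x^2 - (3*e2-4)*x - 4 = 0).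
  { assert (E: (2*(e2-1)*x - (3*e2-4))^2 = D*D) by (rewrite Hx; ring).
    rewrite HD2 in E. assert (4*(e2-1)*((e2-1)*x^2 - (3*e2-4)*x - 4) = 0) by nra.
    apply Rmult_integral in H. destruct H; [lra|auto]. }
  assert (He2x : e2 = (x-2)^2/(x*(x-3))).
  { apply Rmult_eq_reg_r with (x*(x-3)); [|nra]. field_simplify; [nra|nra]. }
  exists x. split; [lra|]. split; [exact He2x|].
  assert (Hsq : sqrt (alpha eps ^ 2 + alpha eps) = 3/8*(x-2)*(6-x)/(x*(x-3))).
  { replace (alpha eps ^ 2 + alpha eps) with ((3/8*(x-2)*(6-x)/(x*(x-3)))*(3/8*(x-2)*(6-x)/(x*(x-3)))).
    - apply sqrt_square. apply Rmult_le_pos; [nra|]. left; apply Rinv_0_lt_compat; nra.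
    - unfold alpha. fold e2. rewrite He2x. field. split; nra. }
  assert (Hden : 1 - 4 * alpha eps - 8 * alpha eps ^ 2 + 8 * alpha eps * sqrt (alpha eps ^ 2 + alpha eps)
     = 12*(x-3)/x^2).
  { rewrite Hsq. unfold alpha. fold e2. rewrite He2x. field. split; nra. }
  unfold lambda_c. cbv zeta. rewrite Hden. split; [|apply sqrt_pos].
  rewrite <- Rsqr_pow2, Rsqr_sqrt.
  - field. split; nra.
  - apply Rmult_le_pos; [lra|]. left; apply Rinv_0_lt_compat. apply Rdiv_lt_0_compat; nra.
Qed.

Lemma xm_facts (lam : R) : 12 < lam^2 ->
  let s := sqrt (1 - 12/lam^2) in
  xi_max lam * (1+s) = 6 /\ 0 <= s /\ s*s = 1 - 12/lam^2 /\ s < 1.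
Proof.
  intros Hl s.
  assert (Hss : s*s = 1 - 12/lam^2).
  { apply sqrt_sqrt.
    assert (12/lam^2 < 1); [|lra].
    apply Rmult_lt_reg_r with (lam^2); [lra|].
    replace (12/lam^2*lam^2) with 12 by (field; nra). lra. }
  assert (Hs0 : 0 <= s) by apply sqrt_pos.
  assert (Hq : 0 < 12/lam^2) by (apply Rdiv_lt_0_compat; lra).
  split; [|split; [exact Hs0|split; [exact Hss|nra]]].
  unfold xi_max. fold s.
  replace (lam ^ 2 / 2 * (1 - s) * (1 + s)) with (lam^2/2 * (1 - s*s)) by ring.
  rewrite Hss. field. nra.
Qed.

Theorem lemma4 (xi eps lam : R) :
  2 < xi -> 1 < eps ->
  (case_II eps lam xi <->
   (Rbar_lt (eps_min xi) (Finite eps) /\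
    lambda_c eps < lam < lambda_max eps xi)).
Proof.
  intros Hxi He.
  destruct (key eps He) as (x & Hx & He2 & Hlc & Hlc0).
  assert (H16 : 16 < x^2/(x-3)).
  { apply Rmult_lt_reg_r with (x-3); [lra|]. field_simplify; nra. }
  assert (Hpos : 0 < 1 - 2/xi).
  { assert (2/xi < 1) by (apply Rmult_lt_reg_r with xi; [lra|]; field_simplify; lra). lra. }
  set (M := eps^2/(1-2/xi) - 1).
  assert (HM : 0 < M).
  { unfold M. assert (1 < eps^2/(1-2/xi)); [|lra].
    apply Rmult_lt_reg_r with (1-2/xi); [lra|].
    replace (eps ^ 2 / (1 - 2 / xi) * (1 - 2 / xi)) with (eps^2) by (field; lra).
    assert (2/xi > 0) by (apply Rdiv_lt_0_compat; lra). nra. }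
  assert (Hmax : 0 < lam -> (lam < lambda_max eps xi <-> U lam xi < eps^2)).
  { intros Hl. unfold lambda_max. fold M.
    assert (HsM : sqrt M * sqrt M = M) by (apply sqrt_sqrt; lra).
    assert (0 <= sqrt M) by apply sqrt_pos.
    assert (HU : U lam xi < eps^2 <-> lam^2 < xi^2 * M).
    { unfold U, M. split; intro HH.
      - apply Rmult_lt_reg_r with ((1-2/xi)/xi^2). apply Rdiv_lt_0_compat; nra.
        replace (xi ^ 2 * (eps ^ 2 / (1 - 2 / xi) - 1) * ((1 - 2 / xi) / xi ^ 2))
          with (eps^2 - (1-2/xi)) by (field; nra).
        replace (lam ^ 2 * ((1 - 2 / xi) / xi ^ 2)) with ((1-2/xi)*(lam^2/xi^2)) by (field; nra).
        nra.
      - replace ((1 - 2 / xi) * (1 + lam ^ 2 / xi ^ 2)) with ((1-2/xi) + (1-2/xi)*(lam^2/xi^2)) by ring.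
        assert (lam^2/xi^2 < eps ^ 2 / (1 - 2 / xi) - 1).
        { apply Rmult_lt_reg_r with (xi^2); [nra|].
          replace (lam^2/xi^2*xi^2) with (lam^2) by (field; lra). lra. }
        assert (E : (1-2/xi) * (eps ^ 2 / (1 - 2 / xi) - 1) = eps^2 - (1-2/xi)) by (field; lra).
        nra. }
    rewrite HU.
    assert (0 <= xi * sqrt M) by nra.
    assert (E : (xi*sqrt M)*(xi*sqrt M) = xi^2*M) by (transitivity (xi^2 * (sqrt M * sqrt M)); [ring | rewrite HsM; reflexivity]).
    split; intro HH.
    - assert (lam*lam < (xi*sqrt M)*(xi*sqrt M)) by (apply Rmult_le_0_lt_compat; lra).
      nra.
    - destruct (Rlt_or_le lam (xi * sqrt M)) as [|H']; auto. exfalso.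
      assert ((xi*sqrt M)*(xi*sqrt M) <= lam*lam) by (apply Rmult_le_compat; lra).
      nra. }
  assert (Hlam4 : lambda_c eps < lam -> 16 < lam^2) by (intro; nra).
  unfold case_II. split.
  - intros (H1 & H2 & H3).
    assert (Hl16 := Hlam4 H1).
    destruct (xm_facts lam ltac:(lra)) as (F1 & F2 & F3 & F4).
    set (s := sqrt (1 - 12/lam^2)) in *.
    split; [|split; [exact H1| apply Hmax; [nra|exact H3]]].
    unfold eps_min. destruct (Rle_dec xi 3) as [h3|h3].
    + exfalso. nra.
    + destruct (Rlt_dec xi 4) as [h4|h4]; simpl; [|exact He].
      assert (Hs : s > (6-xi)/xi).
      { apply Rmult_lt_reg_r with xi; [lra|]. field_simplify; [|lra]. nra. }
      assert (Hs2 : s*s > ((6-xi)/xi)*((6-xi)/xi)).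
      { assert (0 <= (6-xi)/xi) by (apply div_nonneg; lra). nra. }
      rewrite F3 in Hs2.
      assert (Hl : xi^2 < lam^2 * (xi-3)).
      { assert (12/lam^2 < 12*(xi-3)/xi^2).
        { replace (12*(xi-3)/xi^2) with (1 - ((6-xi)/xi)*((6-xi)/xi)) by (field; lra). lra. }
        assert (A1: 12/lam^2 * lam^2 = 12) by (field; nra).
        assert (A2: 12*(xi-3)/xi^2 * xi^2 = 12*(xi-3)) by (field; nra).
        assert (B : 12/lam^2 * xi^2 < 12*(xi-3)).
        { rewrite <- A2. apply Rmult_lt_compat_r; [nra|lra]. }
        assert (C : 12/lam^2 * xi^2 * lam^2 < 12*(xi-3)*lam^2) by (apply Rmult_lt_compat_r; nra).
        replace (12/lam^2 * xi^2 * lam^2) with (12/lam^2*lam^2*xi^2) in C by ring.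
        rewrite A1 in C. lra. }
      assert (Hg : (1 - 2 / xi) * (1 + 1 / (xi - 3)) < eps^2).
      { eapply Rle_lt_trans; [|exact H3]. unfold U.
        apply Rmult_le_compat_l; [lra|].
        assert (1/(xi-3) <= lam^2/xi^2); [|lra].
        apply Rmult_le_reg_r with (xi^2*(xi-3)); [apply Rmult_lt_0_compat; nra|].
        replace (1/(xi-3)*(xi^2*(xi-3))) with (xi^2) by (field; lra).
        replace (lam^2/xi^2*(xi^2*(xi-3))) with (lam^2*(xi-3)) by (field; lra).
        lra. }
      assert (Hgp : 0 <= (1 - 2 / xi) * (1 + 1 / (xi - 3))).
      { apply Rmult_le_pos; [lra|]. assert (0 < 1/(xi-3)) by (apply Rdiv_lt_0_compat; lra). lra. }
      rewrite <- (sqrt_pow2 eps) by lra.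
      apply sqrt_lt_1_alt. lra.
  - intros (H1 & H2 & H3).
    assert (Hl16 := Hlam4 H2).
    destruct (xm_facts lam ltac:(lra)) as (F1 & F2 & F3 & F4).
    set (s := sqrt (1 - 12/lam^2)) in *.
    split; [exact H2|]. split; [|apply Hmax; [nra|exact H3]].
    unfold eps_min in H1. destruct (Rle_dec xi 3) as [h3|h3]; [simpl in H1; contradiction|].
    destruct (Rlt_dec xi 4) as [h4|h4]; simpl in H1.
    +
      set (g := (1 - 2 / xi) * (1 + 1 / (xi - 3))) in *.
      assert (Hg : g = (xi-2)^2/(xi*(xi-3))) by (unfold g; field; lra).
      assert (Hgp : 0 <= g) by (rewrite Hg; apply div_nonneg; nra).
      assert (Heg : g < eps^2).
      { assert (0 <= sqrt g) by apply sqrt_pos. rewrite <- (sqrt_sqrt g) by lra. nra. }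
      assert (Hxx : x < xi).
      { destruct (Rlt_or_le x xi) as [|Hle]; auto. exfalso.
        assert (eps^2 <= g); [|lra].
        rewrite He2, Hg.
        apply Rmult_le_reg_r with (x*(x-3)*(xi*(xi-3))); [repeat apply Rmult_lt_0_compat; lra|].
        replace ((x - 2) ^ 2 / (x * (x - 3)) * (x * (x - 3) * (xi * (xi - 3)))) with ((x-2)^2*(xi*(xi-3))) by (field; nra).
        replace ((xi - 2) ^ 2 / (xi * (xi - 3)) * (x * (x - 3) * (xi * (xi - 3)))) with ((xi-2)^2*(x*(x-3))) by (field; nra).
        assert (E : (xi-2)^2*(x*(x-3)) - (x-2)^2*(xi*(xi-3)) = (x-xi)*(4-(x-4)*(xi-4))) by ring.
        assert (0 <= (x-xi)*(4-(x-4)*(xi-4))); [|lra].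
        apply Rmult_le_pos; nra. }
      assert (Hl2 : x^2/(x-3) < lam^2) by nra.
      assert (Hh : xi^2*(x-3) < x^2*(xi-3)).
      { assert (E : x^2*(xi-3) - xi^2*(x-3) = (x-xi)*(x*xi-3*x-3*xi)) by ring.
        assert (0 < (xi-x)*(9 - (x-3)*(xi-3))); [apply Rmult_lt_0_compat; nra|nra]. }
      assert (Hl : xi^2 < lam^2*(xi-3)).
      { assert (x^2 < lam^2*(x-3)).
        { apply Rmult_lt_compat_r with (r := x-3) in Hl2; [|lra].
          replace (x^2/(x-3)*(x-3)) with (x^2) in Hl2 by (field; lra). lra. }
        nra. }
      assert (Hs2 : ((6-xi)/xi)*((6-xi)/xi) < s*s).
      { rewrite F3. replace (((6-xi)/xi)*((6-xi)/xi)) with (1 - 12*(xi-3)/xi^2) by (field; lra).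
        assert (12/lam^2 < 12*(xi-3)/xi^2); [|lra].
        apply Rmult_lt_reg_r with (lam^2*xi^2); [apply Rmult_lt_0_compat; nra|].
        replace (12/lam^2*(lam^2*xi^2)) with (12*xi^2) by (field; nra).
        replace (12*(xi-3)/xi^2*(lam^2*xi^2)) with (12*(lam^2*(xi-3))) by (field; nra).
        lra. }
      assert (Hs : (6-xi)/xi < s).
      { assert (0 <= (6-xi)/xi) by (apply div_nonneg; lra). nra. }
      assert (6 < xi*(1+s)).
      { apply Rmult_lt_compat_l with (r := xi) in Hs; [|lra].
        replace (xi*((6-xi)/xi)) with (6-xi) in Hs by (field; lra). lra. }
      nra.
    +
      assert (12/lam^2 < 3/4).
      { apply Rmult_lt_reg_r with (lam^2); [nra|].
        replace (12/lam^2*lam^2) with 12 by (field; nra). nra. }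
      assert (s*s > 1/4) by (rewrite F3; lra).
      assert (s > 1/2) by nra.
      nra.
Qed.
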